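(* Let $p\ge 2$. There is no pair $(\vec\psi, D)$, where $\vec\psi=(\psi_1,\dots,\psi_N)$, $N=\tfrac12(p+1)(p+2)$, is a basis of $\mathcal{T}(p)$ suitable for continuous finite elements (consisting of one vertex function for each of the three vertices, $p-1$ edge functions for each of the three edges, and $\tfrac12(p-1)(p-2)$ interior functions) and $D$ is a nonsingular real diagonal $N\times N$ matrix, such that $D$ is a $(p-1)$-exact pseudo-mass matrix for $\vec\psi$, i.e. such that for every $f\in\mathcal{T}(p-1)$ the vector $\vec u=D^{-1}\int_{\Omega_{ref}} f\,\vec\psi\,d\Omega$ satisfies $\vec u^{\,T}\vec\psi=f$ on $\Omega_{ref}$.
   Context: $\Omega_{ref}=\{(r,s): -1\le r,\ -1\le s,\ r+s\le 0\}$ with vertices $V_A=(-1,1)$, $V_B=(-1,-1)$, $V_C=(1,-1)$; edge $E_{\mathcal A}$ is the edge from $V_B$ to $V_C$ (opposite $V_A$), $E_{\mathcal B}$ the edge from $V_C$ to $V_A$ (opposite $V_B$), $E_{\mathcal C}$ the edge from $V_A$ to $V_B$ (opposite $V_C$). $\mathcal{T}(q)=\mathrm{span}\{r^ns^m: m,n\ge0,\ m+n\le q\}$. A vertex function (for a given vertex) is a function on $\Omega_{ref}$ that is nonzero at only that vertex among the three vertices and vanishes identically on the opposite edge. An edge function (for a given edge) is a function that is nonzero along only that edge and vanishes identically on the other two edges. An interior function is a nonzero function vanishing identically on all three edges. A nonsingular matrix $\underline{M}$ is called a $k$-exact pseudo-mass matrix for the basis $\vec\psi$ if $\vec u=\underline{M}^{-1}\int_{\Omega_{ref}}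 f\vec\psi\,d\Omega$ satisfies $\vec u^{\,T}\vec\psi=f$ for all $f\in\mathcal{T}(k)$. *)

(* Defs.v *)
From Stdlib Require Import Reals Lra List Arith ClassicalEpsilon ClassicalDescription.
Open Scope R_scope.

Definition sumN (n : nat) (F : nat -> R) : R :=
  fold_right (fun i acc => F i + acc) 0 (seq 0 n).

(* total Riemann integral: the Riemann integral of f over [a,b] when it exists, 0 otherwise *)
Definition Rint (f : R -> R) (a b : R) : R :=
  match excluded_middle_informative (inhabited (Riemann_integrable f a b)) with
  | left H => RiemannInt (epsilon H (fun _ => True))
  | right _ => 0
  end.

Definition in_tri (r s : R) : Prop := -1 <= r /\ -1 <= s /\ r + s <= 0.

Definition int_ref (g : R -> R -> R) : R :=
  Rint (fun r => Rint (fun s => g r s) (-1) (-r)) (-1) 1.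

Definition in_T (q : nat) (f : R -> R -> R) : Prop :=
  exists c : nat -> nat -> R, forall r s : R,
    f r s = sumN (S q) (fun n => sumN (S (q - n)) (fun m => c n m * r ^ n * s ^ m)).

Inductive label := LA | LB | LC.

Definition vertex (l : label) : R * R :=
  match l with LA => (-1, 1) | LB => (-1, -1) | LC => (1, -1) end.

(* E_A from V_B to V_C, E_B from V_C to V_A, E_C from V_A to V_B *)
Definition on_edge (l : label) (r s : R) : Prop :=
  match l with
  | LA => -1 <= r <= 1 /\ s = -1
  | LB => -1 <= r <= 1 /\ r + s = 0
  | LC => r = -1 /\ -1 <= s <= 1
  end.

Definition vertex_function (l : label) (f : R -> R -> R) : Prop :=
  (forall l', f (fst (vertex l')) (snd (vertex l')) <> 0 <-> l' = l) /\
  (forall r s, on_edge l r s -> f r s = 0).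

Definition edge_function (l : label) (f : R -> R -> R) : Prop :=
  (exists r s, on_edge l r s /\ f r s <> 0) /\
  (forall l' r s, l' <> l -> on_edge l' r s -> f r s = 0).

Definition interior_function (f : R -> R -> R) : Prop :=
  (exists r s, in_tri r s /\ f r s <> 0) /\
  (forall l r s, on_edge l r s -> f r s = 0).

Inductive kind := KVert (l : label) | KEdge (l : label) | KInt.

Definition label_eqb (a b : label) : bool :=
  match a, b with LA, LA | LB, LB | LC, LC => true | _, _ => false end.

Definition kind_eqb (a b : kind) : bool :=
  match a, b with
  | KVert x, KVert y => label_eqb x y
  | KEdge x, KEdge y => label_eqb x y
  | KInt, KInt => true
  | _, _ => false
  end.

Definition has_kind (k : kind) (f : R -> R -> R) : Prop :=
  match k with
  | KVert l => vertex_function l f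
  | KEdge l => edge_function l f
  | KInt => interior_function f
  end.

Definition dimT (p : nat) : nat := ((p + 1) * (p + 2) / 2)%nat.

Definition is_basis (p : nat) (psi : nat -> R -> R -> R) : Prop :=
  (forall i, (i < dimT p)%nat -> in_T p (psi i)) /\
  (forall a : nat -> R,
      (forall r s, in_tri r s -> sumN (dimT p) (fun i => a i * psi i r s) = 0) ->
      forall i, (i < dimT p)%nat -> a i = 0) /\
  (forall f, in_T p f -> exists a : nat -> R,
      forall r s, in_tri r s -> f r s = sumN (dimT p) (fun i => a i * psi i r s)).

Definition count_kind (N : nat) (kd : nat -> kind) (k : kind) : nat :=
  length (filter (fun i => kind_eqb (kd i) k) (seq 0 N)).

Definition fe_suitable (p : nat) (psi : nat -> R -> R -> R) : Prop :=
  exists kd : nat -> kind,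
    (forall i, (i < dimT p)%nat -> has_kind (kd i) (psi i)) /\
    (forall l, count_kind (dimT p) kd (KVert l) = 1%nat) /\
    (forall l, count_kind (dimT p) kd (KEdge l) = (p - 1)%nat) /\
    count_kind (dimT p) kd KInt = ((p - 1) * (p - 2) / 2)%nat.

Definition diag_pseudo_mass_exact (k N : nat) (psi : nat -> R -> R -> R) (d : nat -> R) : Prop :=
  forall f, in_T k f ->
    forall r s, in_tri r s ->
      sumN N (fun i => (/ d i * int_ref (fun x y => f x y * psi i x y)) * psi i r s) = f r s.

(* Main.v *)
Require Import Defs.
From Stdlib Require Import Reals.
Open Scope R_scope.
From Coquelicot Require Import Coquelicot.
From Stdlib Require Import Lra Lia List Arith FunctionalExtensionality ClassicalEpsilon.

Lemma fr_shift (F : nat -> R) : forall l x,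
  fold_right (fun i acc => F i + acc) x l = fold_right (fun i acc => F i + acc) 0 l + x.
Proof. induction l; intros; simpl; [lra| rewrite IHl; lra]. Qed.

Lemma sumN_0 F : sumN 0 F = 0.
Proof. reflexivity. Qed.

Lemma sumN_S n F : sumN (S n) F = sumN n F + F n.
Proof. unfold sumN; rewrite seq_S, fold_right_app; simpl; rewrite fr_shift; ring. Qed.

Lemma sumN_ext n F G : (forall i, (i < n)%nat -> F i = G i) -> sumN n F = sumN n G.
Proof. induction n; intros H; [reflexivity|]. rewrite !sumN_S, IHn, H; auto. Qed.

Lemma sumN_plus n F G : sumN n (fun i => F i + G i) = sumN n F + sumN n G.
Proof. induction n; [unfold sumN; simpl; ring|]. rewrite !sumN_S, IHn; ring. Qed.

Lemma sumN_scal n k F : sumN n (fun i => k * F i) = k * sumN n F.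
Proof. induction n; [unfold sumN; simpl; ring|]. rewrite !sumN_S, IHn; ring. Qed.

Lemma sumN_zero n F : (forall i, (i < n)%nat -> F i = 0) -> sumN n F = 0.
Proof. intros H; rewrite (sumN_ext n F (fun _ => 0 * 0)); [rewrite sumN_scal; ring|].
  intros; rewrite H; auto; ring. Qed.

Lemma sumN_Sl n F : sumN (S n) F = F 0%nat + sumN n (fun i => F (S i)).
Proof. induction n; [unfold sumN; simpl; ring|]. rewrite sumN_S, IHn, sumN_S; ring. Qed.

Lemma sumN_tail n n' F : (n <= n')%nat -> (forall i, (n <= i)%nat -> (i < n')%nat -> F i = 0) ->
  sumN n' F = sumN n F.
Proof. induction 1; intros HF; [reflexivity|]. rewrite sumN_S, IHle, HF; try lia; [ring|].
  intros; apply HF; lia. Qed.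

Lemma sumN_single n F k : (k < n)%nat -> (forall i, (i < n)%nat -> i <> k -> F i = 0) -> sumN n F = F k.
Proof. induction n; intros Hk H; [lia|]. rewrite sumN_S. destruct (Nat.eq_dec k n).
  - subst. rewrite sumN_zero; [ring|]. intros; apply H; lia.
  - rewrite IHn, (H n); auto; try lia; ring. Qed.

Lemma sumN_swap n m (F : nat -> nat -> R) :
  sumN n (fun i => sumN m (fun j => F i j)) = sumN m (fun j => sumN n (fun i => F i j)).
Proof. induction n; [rewrite sumN_0, sumN_zero; auto|].
  rewrite sumN_S, IHn, <- sumN_plus. apply sumN_ext; intros; rewrite sumN_S; ring. Qed.
Definition S2 K (c : nat -> nat -> R) (u v : R) :=
  sumN K (fun n => sumN K (fun m => c n m * u ^ n * v ^ m)).

Definition PC (a b : R -> R -> R) (q : nat) (f : R -> R -> R) : Prop :=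
  exists K c, (forall n m, (K <= n \/ K <= m)%nat -> c n m = 0) /\
    (forall n m, (q < n + m)%nat -> c n m = 0) /\
    forall x y, f x y = S2 K c (a x y) (b x y).

Lemma S2_ext_K K K' c u v : (forall n m, (K <= n \/ K <= m)%nat -> c n m = 0) -> (K <= K')%nat ->
  S2 K' c u v = S2 K c u v.
Proof.
  intros Hs HK; unfold S2. rewrite (sumN_tail K K'); auto.
  - apply sumN_ext; intros n Hn. apply sumN_tail; auto. intros m Hm _; rewrite Hs; [ring|lia].
  - intros n Hn _; apply sumN_zero; intros m _; rewrite Hs; [ring|lia].
Qed.

Lemma S2_plus K c1 c2 u v : S2 K (fun n m => c1 n m + c2 n m) u v = S2 K c1 u v + S2 K c2 u v.
Proof. unfold S2; rewrite <- sumN_plus; apply sumN_ext; intros; rewrite <- sumN_plus;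
  apply sumN_ext; intros; ring. Qed.

Lemma S2_scal K k c u v : S2 K (fun n m => k * c n m) u v = k * S2 K c u v.
Proof. unfold S2; rewrite <- sumN_scal; apply sumN_ext; intros; rewrite <- sumN_scal;
  apply sumN_ext; intros; ring. Qed.

Section PCsec.
Variables a b : R -> R -> R.

Lemma PC_ext q f g : (forall x y, f x y = g x y) -> PC a b q f -> PC a b q g.
Proof. intros H [K [c [H1 [H2 H3]]]]; exists K, c; repeat split; auto; intros; rewrite <- H; auto. Qed.

Lemma PC_weak q q' f : (q <= q')%nat -> PC a b q f -> PC a b q' f.
Proof. intros Hq [K [c [H1 [H2 H3]]]]; exists K, c; repeat split; auto; intros; apply H2; lia. Qed.

Lemma PC_zero q : PC a b q (fun _ _ => 0).
Proof. exists 0%nat, (fun _ _ => 0); repeat split; auto. Qed.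

Lemma PC_const k : PC a b 0 (fun _ _ => k).
Proof. exists 1%nat, (fun n m => match n, m with O, O => k | _, _ => 0 end); repeat split.
  - intros [|n] [|m] H; auto; lia.
  - intros [|n] [|m] H; auto; simpl in H; lia.
  - intros; unfold S2, sumN; simpl; ring. Qed.

Lemma PC_a : PC a b 1 a.
Proof. exists 2%nat, (fun n m => match n, m with 1, O => 1 | _, _ => 0 end); repeat split.
  - intros [|[|n]] [|m] H; auto; lia.
  - intros [|[|n]] [|m] H; auto; simpl in H; lia.
  - intros; unfold S2, sumN; simpl; ring. Qed.

Lemma PC_b : PC a b 1 b.
Proof. exists 2%nat, (fun n m => match n, m with O, 1 => 1 | _, _ => 0 end); repeat split.
  - intros [|n] [|[|m]] H; auto; lia.
  - intros [|n] [|[|m]] H; auto; simpl in H; lia.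
  - intros; unfold S2, sumN; simpl; ring. Qed.

Lemma PC_add q f g : PC a b q f -> PC a b q g -> PC a b q (fun x y => f x y + g x y).
Proof. intros [K1 [c1 [H1 [H2 H3]]]] [K2 [c2 [G1 [G2 G3]]]].
  exists (Nat.max K1 K2), (fun n m => c1 n m + c2 n m); repeat split.
  - intros n m H; rewrite H1, G1; try ring; lia.
  - intros n m H; rewrite H2, G2; auto; ring.
  - intros x y; rewrite S2_plus, H3, G3, (S2_ext_K K1 (Nat.max K1 K2) c1), (S2_ext_K K2 (Nat.max K1 K2) c2); auto; lia.
Qed.

Lemma PC_scal q k f : PC a b q f -> PC a b q (fun x y => k * f x y).
Proof. intros [K [c [H1 [H2 H3]]]]; exists K, (fun n m => k * c n m); repeat split.
  - intros n m H; rewrite H1; auto; ring.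
  - intros n m H; rewrite H2; auto; ring.
  - intros; rewrite S2_scal, H3; auto. Qed.

Lemma PC_mula q f : PC a b q f -> PC a b (S q) (fun x y => a x y * f x y).
Proof. intros [K [c [H1 [H2 H3]]]].
  exists (S K), (fun n m => match n with O => 0 | S n' => c n' m end); repeat split.
  - intros [|n] m H; auto; apply H1; lia.
  - intros [|n] m H; auto; apply H2; lia.
  - intros x y; rewrite H3; unfold S2. rewrite sumN_Sl, (sumN_zero (S K) (fun m => 0 * _ * _)) by (intros; ring).
    rewrite Rplus_0_l, <- sumN_scal; apply sumN_ext; intros n Hn.
    rewrite sumN_S, H1 by lia. rewrite <- sumN_scal; simpl; rewrite Rmult_0_l, Rmult_0_l, Rplus_0_r.
    apply sumN_ext; intros; ring.
Qed.

Lemma PC_mulb q f : PC a b q f -> PC a b (S q) (fun x y => b x y * f x y).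
Proof. intros [K [c [H1 [H2 H3]]]].
  exists (S K), (fun n m => match m with O => 0 | S m' => c n m' end); repeat split.
  - intros n [|m] H; auto; apply H1; lia.
  - intros n [|m] H; auto; apply H2; lia.
  - intros x y; rewrite H3; unfold S2. rewrite sumN_S.
    rewrite (sumN_zero (S K) (fun m => _)).
    2:{ intros [|m] _; [ring|]; rewrite H1 by lia; ring. }
    rewrite Rplus_0_r, <- sumN_scal; apply sumN_ext; intros n Hn.
    rewrite sumN_Sl, <- sumN_scal; simpl; rewrite Rmult_0_l, !Rmult_0_l, Rplus_0_l.
    apply sumN_ext; intros; ring.
Qed.

Lemma PC_sum q N (F : nat -> R -> R -> R) : (forall i, (i < N)%nat -> PC a b q (F i)) ->
  PC a b q (fun x y => sumN N (fun i => F i x y)).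
Proof. induction N; intros H.
  - apply (PC_ext _ (fun _ _ => 0)); [intros; reflexivity| apply PC_zero].
  - apply (PC_ext _ (fun x y => sumN N (fun i => F i x y) + F N x y)).
    + intros; rewrite sumN_S; auto.
    + apply PC_add; auto.
Qed.

Lemma PC_monom q g n m : PC a b q g ->
  PC a b (n + m + q) (fun x y => a x y ^ n * b x y ^ m * g x y).
Proof. intros Hg. induction n.
  - induction m; simpl.
    + apply (PC_ext _ g); auto; intros; ring.
    + eapply PC_ext; [|apply PC_mulb, IHm]. intros; simpl; ring.
  - eapply PC_ext; [|apply PC_mula, IHn]. intros; simpl; ring.
Qed.

Lemma PC_mul q1 q2 f g : PC a b q1 f -> PC a b q2 g -> PC a b (q1 + q2) (fun x y => f x y * g x y).
Proof. intros [K [c [H1 [H2 H3]]]] Hg.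
  apply (PC_ext _ (fun x y => sumN K (fun n => sumN K (fun m =>
     c n m * (a x y ^ n * b x y ^ m * g x y))))).
  - intros x y; rewrite H3; unfold S2. rewrite Rmult_comm, <- sumN_scal; apply sumN_ext; intros.
    rewrite <- sumN_scal; apply sumN_ext; intros; ring.
  - apply PC_sum; intros n _; apply PC_sum; intros m _.
    destruct (le_lt_dec (n + m) q1) as [Hle|Hlt].
    + apply PC_scal, (PC_weak (n + m + q2)); [lia|]. apply PC_monom; auto.
    + eapply PC_ext; [|apply PC_zero]. intros; rewrite H2; auto; ring.
Qed.

Lemma PC_pow h n : PC a b 1 h -> PC a b n (fun x y => h x y ^ n).
Proof. intros Hh; induction n; simpl.
  - apply PC_const.
  - apply (PC_mul 1 n); auto.
Qed.

End PCsec.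

Lemma PC_change a b a' b' q f : PC a b 1 a' -> PC a b 1 b' -> PC a' b' q f -> PC a b q f.
Proof. intros Ha Hb [K [c [H1 [H2 H3]]]].
  apply (PC_ext _ _ _ (fun x y => sumN K (fun n => sumN K (fun m =>
     c n m * (a' x y ^ n * b' x y ^ m))))).
  - intros x y; rewrite H3; unfold S2; apply sumN_ext; intros; apply sumN_ext; intros; ring.
  - apply PC_sum; intros n _; apply PC_sum; intros m _.
    destruct (le_lt_dec (n + m) q) as [Hle|Hlt].
    + apply PC_scal, (PC_weak _ _ (n + m)); [lia|]. apply PC_mul; apply PC_pow; auto.
    + eapply PC_ext; [|apply PC_zero]. intros; rewrite H2; auto; ring.
Qed.
Definition X (x y : R) := x.
Definition Y (x y : R) := y.
Definition U (x y : R) := x + 1.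
Definition Tt (x y : R) := - (x + y).

Lemma sum2_trunc q M (F : nat -> nat -> R) : (S q <= M)%nat ->
  (forall n m, (q < n + m)%nat -> F n m = 0) ->
  sumN (S q) (fun n => sumN (S (q - n)) (F n)) = sumN M (fun n => sumN M (F n)).
Proof. intros HM HF. rewrite (sumN_tail (S q) M); auto.
  - apply sumN_ext; intros n Hn. symmetry; apply sumN_tail; [lia|]. intros; apply HF; lia.
  - intros n Hn _; apply sumN_zero; intros; apply HF; lia.
Qed.

Lemma in_T_PC q f : in_T q f -> PC X Y q f.
Proof. intros [c Hc].
  exists (S q), (fun n m => if (n + m <=? q)%nat then c n m else 0); repeat split.
  - intros n m H; destruct (Nat.leb_spec (n + m) q); auto; lia.
  - intros n m H; destruct (Nat.leb_spec (n + m) q); auto; lia.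
  - intros x y; rewrite Hc; unfold S2, X, Y.
    rewrite <- (sum2_trunc q (S q) (fun n m => (if (n + m <=? q)%nat then c n m else 0) * x ^ n * y ^ m)); auto.
    + apply sumN_ext; intros n Hn; apply sumN_ext; intros m Hm.
      destruct (Nat.leb_spec (n + m) q); auto; lia.
    + intros n m H; destruct (Nat.leb_spec (n + m) q); [lia|ring].
Qed.

Lemma PC_in_T q f : PC X Y q f -> in_T q f.
Proof. intros [K [c [H1 [H2 H3]]]]. exists c; intros x y.
  rewrite H3, <- (S2_ext_K K (Nat.max K (S q))) by (auto; lia). unfold S2, X, Y.
  rewrite (sum2_trunc q (Nat.max K (S q)) (fun n m => c n m * x ^ n * y ^ m)); auto; [lia|].
  intros n m H; rewrite H2; auto; ring.
Qed.

Lemma PC_XY_U : PC X Y 1 U.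
Proof. apply (PC_ext _ _ _ (fun x y => X x y + 1 * 1)); [intros; unfold U, X; ring|].
  apply PC_add; [apply PC_a| apply (PC_weak _ _ 0); [lia|apply PC_const]]. Qed.

Lemma PC_XY_T : PC X Y 1 Tt.
Proof. apply (PC_ext _ _ _ (fun x y => (-1) * X x y + (-1) * Y x y)); [intros; unfold Tt, X, Y; ring|].
  apply PC_add; apply PC_scal; [apply PC_a|apply PC_b]. Qed.

Lemma PC_UT_X : PC U Tt 1 X.
Proof. apply (PC_ext _ _ _ (fun x y => U x y + (-1) * 1)); [intros; unfold U, X; ring|].
  apply PC_add; [apply PC_a| apply PC_scal, (PC_weak _ _ 0); [lia|apply PC_const]]. Qed.

Lemma PC_UT_Y : PC U Tt 1 Y.
Proof. apply (PC_ext _ _ _ (fun x y => ((-1) * Tt x y + (-1) * U x y) + 1 * 1)); [intros; unfold Tt, U, Y; ring|].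
  apply PC_add; [apply PC_add; apply PC_scal; [apply PC_b|apply PC_a]|].
  apply (PC_weak _ _ 0); [lia|apply PC_const]. Qed.

Lemma XY_UT q f : PC X Y q f -> PC U Tt q f.
Proof. apply PC_change; [apply PC_UT_X|apply PC_UT_Y]. Qed.
Lemma UT_XY q f : PC U Tt q f -> PC X Y q f.
Proof. apply PC_change; [apply PC_XY_U|apply PC_XY_T]. Qed.

Lemma S2_split K c u t : S2 (S K) c u t =
  sumN (S K) (fun m => c 0%nat m * t ^ m) + sumN K (fun n => c (S n) 0%nat * u ^ (S n)) +
  u * t * S2 K (fun n m => c (S n) (S m)) u t.
Proof. unfold S2. rewrite sumN_Sl.
  rewrite (sumN_ext K _ (fun n => c (S n) 0%nat * u ^ (S n) +
      u * t * sumN K (fun m => c (S n) (S m) * u ^ n * t ^ m))).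
  - rewrite sumN_plus, sumN_scal. rewrite (sumN_ext (S K) (fun m => c 0%nat m * u ^ 0 * t ^ m)
      (fun m => c 0%nat m * t ^ m)) by (intros; simpl; ring). ring.
  - intros n _. rewrite sumN_Sl, <- sumN_scal. simpl. f_equal; [ring|].
    apply sumN_ext; intros; simpl; ring.
Qed.

Lemma factor q G : (2 <= q)%nat -> PC U Tt q G ->
  (forall t, 0 <= t <= 2 -> G (-1) (1 - t) = 0) ->
  (forall x, -1 <= x <= 1 -> G x (- x) = 0) ->
  exists H, PC U Tt (q - 2) H /\ forall x y, in_tri x y -> G x y = U x y * Tt x y * H x y.
Proof. intros Hq [K [c [H1 [H2 H3]]]] HC HB.
  exists (fun x y => S2 K (fun n m => c (S n) (S m)) (U x y) (Tt x y)). split.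
  - exists K, (fun n m => c (S n) (S m)); repeat split; auto.
    + intros n m Hnm; apply H1; lia.
    + intros n m Hnm; apply H2; lia.
  - assert (E : forall x y, G x y = S2 (S K) c (U x y) (Tt x y)).
    { intros; rewrite H3; symmetry; apply S2_ext_K; auto. }
    intros x y [Hx [Hy Hxy]].
    assert (E1 : sumN (S K) (fun m => c 0%nat m * Tt x y ^ m) = 0).
    { rewrite <- (HC (Tt x y)) by (unfold Tt; lra). rewrite E, S2_split.
      unfold U, Tt. replace (-1 + 1) with 0 by ring. replace (- (-1 + (1 - - (x + y)))) with (- (x + y)) by ring.
      rewrite (sumN_zero K (fun n => _ * 0 ^ S n)) by (intros; simpl; ring). ring. }
    assert (E2 : c 0%nat 0%nat + sumN K (fun n => c (S n) 0%nat * U x y ^ (S n)) = 0).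
    { rewrite <- (HB x) by lra. rewrite E, S2_split. unfold Tt, U. replace (- (x + - x)) with 0 by ring.
      rewrite sumN_Sl, (sumN_zero K (fun m => c 0%nat (S m) * 0 ^ S m)) by (intros; simpl; ring).
      simpl. ring. }
    assert (E3 : c 0%nat 0%nat = 0).
    { rewrite <- (HC 0) by lra. rewrite E, S2_split. unfold U, Tt.
      replace (-1 + 1) with 0 by ring. replace (- (-1 + (1 - 0))) with 0 by ring.
      rewrite sumN_Sl, (sumN_zero K (fun m => c 0%nat (S m) * 0 ^ S m)) by (intros; simpl; ring).
      rewrite (sumN_zero K (fun n => _ * 0 ^ S n)) by (intros; simpl; ring). simpl; ring. }
    rewrite E, S2_split. lra.
Qed.
Lemma ct_plus (f g : R -> R) x : continuous f x -> continuous g x -> continuous (fun y => f y + g y) x.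
Proof. intros; exact (continuous_plus f g x H H0). Qed.
Lemma ct_mult (f g : R -> R) x : continuous f x -> continuous g x -> continuous (fun y => f y * g y) x.
Proof. intros; exact (continuous_mult f g x H H0). Qed.
Lemma ct_pow (f : R -> R) x n : continuous f x -> continuous (fun y => f y ^ n) x.
Proof. intros H; induction n; simpl. apply continuous_const. apply ct_mult; auto. Qed.
Lemma ct_sumN N (F : nat -> R -> R) x : (forall i, (i < N)%nat -> continuous (F i) x) ->
  continuous (fun y => sumN N (fun i => F i y)) x.
Proof. induction N; intros H.
  - apply (continuous_ext (fun _ => 0)); [reflexivity| apply continuous_const].
  - apply (continuous_ext (fun y => sumN N (fun i => F i y) + F N y)); [intros; rewrite sumN_S; auto|].
    apply ct_plus; auto. Qed.
Lemma ct_S2 K c (fa fb : R -> R) z : continuous fa z -> continuous fb z ->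
  continuous (fun t => S2 K c (fa t) (fb t)) z.
Proof. intros Ha Hb; unfold S2. apply ct_sumN; intros; apply ct_sumN; intros.
  apply ct_mult; [apply ct_mult; [apply continuous_const| apply ct_pow; auto]|apply ct_pow; auto]. Qed.

Lemma PC_line q G x0 y0 al be z : PC X Y q G ->
  continuous (fun t => G (x0 + t * al) (y0 + t * be)) z.
Proof. intros [K [c [_ [_ H3]]]].
  apply (continuous_ext (fun t => S2 K c (x0 + t * al) (y0 + t * be))); [intros; rewrite H3; reflexivity|].
  apply ct_S2; (apply ct_plus; [apply continuous_const| apply ct_mult; [apply continuous_id|apply continuous_const]]).
Qed.

Lemma PC_slice q G x z : PC X Y q G -> continuous (fun s => G x s) z.
Proof. intros H. apply (continuous_ext (fun t => G (x + t * 0) (0 + t * 1))).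
  intros; f_equal; ring. apply PC_line with q; auto. Qed.

Lemma Rint_RInt (f : R -> R) a b : ex_RInt f a b -> Rint f a b = RInt f a b.
Proof. intros H. unfold Rint. destruct (ClassicalDescription.excluded_middle_informative (inhabited (Riemann_integrable f a b))) as [Hi|Hi].
  - symmetry; apply RInt_Reals.
  - exfalso; apply Hi; constructor; apply ex_RInt_Reals_0; auto. Qed.

Lemma RInt_plusR (f g : R -> R) a b : ex_RInt f a b -> ex_RInt g a b ->
  RInt (fun x => f x + g x) a b = RInt f a b + RInt g a b.
Proof. intros; exact (@RInt_plus R_CompleteNormedModule f g a b H H0). Qed.
Lemma RInt_scalR (f : R -> R) k a b : ex_RInt f a b -> RInt (fun x => k * f x) a b = k * RInt f a b.
Proof. intros; exact (@RInt_scal R_CompleteNormedModule f a b k H). Qed.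
Lemma ex_RInt_cont (f : R -> R) a b : (forall z, continuous f z) -> ex_RInt f a b.
Proof. intros; apply (@ex_RInt_continuous R_CompleteNormedModule); auto. Qed.

Lemma RInt_sumN N (F : nat -> R -> R) a b : (forall i z, continuous (F i) z) ->
  RInt (fun s => sumN N (fun i => F i s)) a b = sumN N (fun i => RInt (F i) a b).
Proof. intros Hc; induction N.
  - rewrite sumN_0. transitivity (RInt (fun _ => 0 * 0) a b).
    + apply RInt_ext; intros; rewrite sumN_0; symmetry; apply Rmult_0_l.
    + rewrite RInt_scalR; [apply Rmult_0_l|]. apply ex_RInt_cont; intros; apply continuous_const.
  - rewrite sumN_S, <- IHN. transitivity (RInt (fun s => sumN N (fun i => F i s) + F N s) a b).
    + apply RInt_ext; intros; rewrite sumN_S; auto.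
    + apply RInt_plusR; apply ex_RInt_cont; intros; auto. apply ct_sumN; auto.
Qed.

Lemma ct_RIntb (g : R -> R) a b : (forall z, continuous g z) -> continuous (fun b => RInt g a b) b.
Proof. intros Hg. apply (@ex_derive_continuous R_AbsRing R_NormedModule). exists (g b).
  apply (is_derive_RInt g (RInt g a) a b); auto.
  apply filter_forall; intros; apply (@RInt_correct R_CompleteNormedModule); apply ex_RInt_cont; auto. Qed.

Definition inner (G : R -> R -> R) r := RInt (fun s => G r s) (-1) (- r).

Lemma inner_cont q G z : PC X Y q G -> continuous (inner G) z.
Proof. intros HG. destruct HG as [K [c [_ [_ H3]]]].
  set (g := fun n s => sumN K (fun m => c n m * s ^ m)).
  assert (Hg : forall n z, continuous (g n) z).
  { intros n z0; unfold g; apply ct_sumN; intros; apply ct_mult; [apply continuous_const| apply ct_pow, continuous_id]. }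
  apply (continuous_ext (fun r => sumN K (fun n => r ^ n * RInt (g n) (-1) (- r)))).
  - intros r. unfold inner. rewrite (RInt_ext _ (fun s => sumN K (fun n => r ^ n * g n s))).
    + rewrite RInt_sumN. apply sumN_ext; intros; rewrite RInt_scalR; auto. apply ex_RInt_cont; auto.
      intros i z0; apply ct_mult; [apply continuous_const|auto].
    + intros s _; rewrite H3; unfold S2, X, Y, g. apply sumN_ext; intros; rewrite <- sumN_scal;
      apply sumN_ext; intros; ring.
  - apply ct_sumN; intros; apply ct_mult; [apply ct_pow, continuous_id|].
    apply (continuous_comp (fun r => - r) (fun b => RInt (g i) (-1) b)).
    + apply (@continuous_opp R_UniformSpace R_AbsRing R_NormedModule (fun r => r)), continuous_id.
    + apply ct_RIntb; auto.
Qed.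

Lemma int_ref_eq q G : PC X Y q G -> int_ref G = RInt (inner G) (-1) 1.
Proof. intros HG. unfold int_ref.
  replace (fun r => Rint (fun s => G r s) (-1) (- r)) with (inner G).
  - apply Rint_RInt, ex_RInt_cont; intros; eapply inner_cont; eauto.
  - apply functional_extensionality; intros r; unfold inner; symmetry; apply Rint_RInt, ex_RInt_cont.
    intros; eapply PC_slice; eauto.
Qed.

Lemma int_ref_plus q F G : PC X Y q F -> PC X Y q G ->
  int_ref (fun x y => F x y + G x y) = int_ref F + int_ref G.
Proof. intros HF HG. rewrite (int_ref_eq q F), (int_ref_eq q G), (int_ref_eq q); auto; [|apply PC_add; auto].
  rewrite <- RInt_plusR; try (apply ex_RInt_cont; intros; eapply inner_cont; eauto).
  apply RInt_ext; intros r _. unfold inner. apply RInt_plusR; apply ex_RInt_cont; intros; eapply PC_slice; eauto.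
Qed.

Lemma int_ref_scal q k F : PC X Y q F -> int_ref (fun x y => k * F x y) = k * int_ref F.
Proof. intros HF. rewrite (int_ref_eq q F), (int_ref_eq q); auto; [|apply PC_scal; auto].
  rewrite <- RInt_scalR; try (apply ex_RInt_cont; intros; eapply inner_cont; eauto).
  apply RInt_ext; intros r _. unfold inner. apply RInt_scalR; apply ex_RInt_cont; intros; eapply PC_slice; eauto.
Qed.

Lemma int_ref_sum q N (w : nat -> R) (F : nat -> R -> R -> R) :
  (forall i, (i < N)%nat -> PC X Y q (F i)) ->
  int_ref (fun x y => sumN N (fun i => w i * F i x y)) = sumN N (fun i => w i * int_ref (F i)).
Proof. induction N; intros H.
  - rewrite sumN_0. replace (fun x y : R => sumN 0 (fun i => w i * F i x y)) with (fun x y : R => 0 * 0).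
    + rewrite (int_ref_scal 0 0 (fun _ _ => 0)); [ring|apply PC_const].
    + do 2 (apply functional_extensionality; intro). rewrite sumN_0; ring.
  - replace (fun x y => sumN (S N) (fun i => w i * F i x y)) with
      (fun x y => sumN N (fun i => w i * F i x y) + w N * F N x y).
    + rewrite (int_ref_plus q), int_ref_scal with (q := q), IHN, sumN_S; auto.
      apply PC_sum; intros; apply PC_scal; auto. apply PC_scal; auto.
    + do 2 (apply functional_extensionality; intro). rewrite sumN_S; auto.
Qed.

Lemma cont_eps (f : R -> R) c : continuous f c -> forall eps, 0 < eps ->
  exists al, 0 < al /\ forall z, Rabs (z - c) < al -> Rabs (f z - f c) < eps.
Proof. intros H eps He. apply continuity_pt_filterlim in H.
  destruct (H eps) as [al [Hal Hz]]; [lra|]. exists al; split; [lra|]. intros z Hzc.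
  destruct (Req_dec z c) as [->|Hne]. rewrite Rminus_diag, Rabs_R0; auto.
  apply (Hz z); split; [split; [constructor| auto]|exact Hzc]. Qed.

Lemma RInt_pos_pt (phi : R -> R) a b c : (forall z, continuous phi z) -> a < c < b ->
  (forall z, a < z < b -> 0 <= phi z) -> 0 < phi c -> 0 < RInt phi a b.
Proof. intros Hc Hab Hp Hpc.
  destruct (cont_eps phi c (Hc c) (phi c / 2)) as [al [Hal Hz]]; [lra|].
  set (a' := Rmax a (c - al / 2)). set (b' := Rmin b (c + al / 2)).
  assert (Ha' : a <= a' < c) by (unfold a'; split; [apply Rmax_l| apply Rmax_lub_lt; lra]).
  assert (Hb' : c < b' <= b) by (unfold b'; split; [apply Rmin_glb_lt; lra| apply Rmin_l]).
  assert (Ea : forall u v, ex_RInt phi u v) by (intros; apply ex_RInt_cont; auto).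
  assert (E1 : RInt phi a b = RInt phi a a' + (RInt phi a' b' + RInt phi b' b)).
  { transitivity (plus (RInt phi a a') (plus (RInt phi a' b') (RInt phi b' b))); [|reflexivity].
    rewrite !RInt_Chasles; auto. }
  rewrite E1.
  assert (0 <= RInt phi a a') by (apply RInt_ge_0; [lra|auto|intros; apply Hp; lra]).
  assert (0 <= RInt phi b' b) by (apply RInt_ge_0; [lra|auto|intros; apply Hp; lra]).
  assert (0 < RInt phi a' b').
  { apply RInt_gt_0; [lra| |intros; auto].
    intros z Hzr. assert (Rabs (z - c) < al).
    { unfold a', b' in Hzr. pose proof (Rmax_r a (c - al/2)). pose proof (Rmin_r b (c + al/2)).
      apply Rabs_def1; lra. }
    specialize (Hz z H1). apply Rabs_def2 in Hz. lra. }
  lra.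
Qed.

Lemma cont_zero_right (phi : R -> R) : continuous phi 0 -> (forall t, 0 < t <= 1 -> phi t = 0) -> phi 0 = 0.
Proof. intros Hc Hz. destruct (Req_dec (phi 0) 0) as [|Hne]; auto. exfalso.
  destruct (cont_eps phi 0 Hc (Rabs (phi 0))) as [al [Hal Hd]]; [apply Rabs_pos_lt; auto|].
  set (t := Rmin (al / 2) 1). assert (Ht : 0 < t <= 1) by (unfold t; split; [apply Rmin_glb_lt; lra|apply Rmin_r]).
  assert (Rabs (t - 0) < al). { rewrite Rminus_0_r, Rabs_right by lra. unfold t. pose proof (Rmin_l (al/2) 1). lra. }
  specialize (Hd t H). rewrite Hz in Hd by auto. rewrite Rminus_0_l, Rabs_Ropp in Hd. lra.
Qed.

Lemma int_ref_zero q G : PC X Y q G -> (forall x y, in_tri x y -> 0 <= G x y) -> int_ref G = 0 ->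
  forall x y, -1 < x -> -1 < y -> x + y < 0 -> G x y = 0.
Proof. intros HG Hpos H0 x y Hx Hy Hxy.
  destruct (Req_dec (G x y) 0) as [|Hne]; auto. exfalso.
  assert (Hgt : 0 < G x y) by (pose proof (Hpos x y (conj (Rlt_le _ _ Hx) (conj (Rlt_le _ _ Hy) (Rlt_le _ _ Hxy)))); lra).
  assert (Hin : 0 < inner G x).
  { unfold inner. apply RInt_pos_pt with y; auto; [intros; eapply PC_slice; eauto|lra|].
    intros z Hz; apply Hpos; unfold in_tri; lra. }
  rewrite (int_ref_eq q) in H0; auto.
  assert (0 < RInt (inner G) (-1) 1); [|lra].
  apply RInt_pos_pt with x; auto; [intros; eapply inner_cont; eauto|lra|].
  intros r Hr. unfold inner. apply RInt_ge_0; [lra| apply ex_RInt_cont; intros; eapply PC_slice; eauto|].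
  intros s Hs; apply Hpos; unfold in_tri; lra.
Qed.
Lemma kind_eqb_true a b : kind_eqb a b = true <-> a = b.
Proof. destruct a as [[]|[]|], b as [[]|[]|]; simpl; split; intro; congruence. Qed.

Lemma count_one N kd k : count_kind N kd k = 1%nat ->
  exists i, (i < N)%nat /\ kd i = k /\ forall j, (j < N)%nat -> kd j = k -> j = i.
Proof. unfold count_kind. destruct (filter (fun i => kind_eqb (kd i) k) (seq 0 N)) as [|i [|]] eqn:E;
  simpl; intros H; try lia.
  assert (Hi : In i (filter (fun i => kind_eqb (kd i) k) (seq 0 N))) by (rewrite E; left; auto).
  apply filter_In in Hi as [Hi Hk]. apply in_seq in Hi. apply kind_eqb_true in Hk.
  exists i; repeat split; auto; try lia. intros j Hj Hkj.
  assert (Hjn : In j (filter (fun i => kind_eqb (kd i) k) (seq 0 N))).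
  { apply filter_In; split; [apply in_seq; lia| apply kind_eqb_true; auto]. }
  rewrite E in Hjn; destruct Hjn as [|[]]; auto.
Qed.

Lemma count_pos N kd k : (1 <= count_kind N kd k)%nat -> exists i, (i < N)%nat /\ kd i = k.
Proof. unfold count_kind. destruct (filter (fun i => kind_eqb (kd i) k) (seq 0 N)) as [|i l] eqn:E;
  simpl; intros H; try lia.
  assert (Hi : In i (filter (fun i => kind_eqb (kd i) k) (seq 0 N))) by (rewrite E; left; auto).
  apply filter_In in Hi as [Hi Hk]. apply in_seq in Hi. apply kind_eqb_true in Hk. exists i; split; auto; lia.
Qed.

Lemma vertex_other l k f : has_kind k f -> k <> KVert l -> l <> LA ->
  f (fst (vertex l)) (snd (vertex l)) = 0.
Proof. intros Hk Hne Hl. destruct (Req_dec (f (fst (vertex l)) (snd (vertex l))) 0) as [|Hnz]; auto.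
  exfalso. destruct k as [l'|l'|]; simpl in Hk.
  - destruct Hk as [Hv _]. apply Hne. f_equal. symmetry; apply (Hv l); auto.
  - destruct Hk as [_ Hv]. destruct l; [congruence| |]; destruct l'; simpl in Hnz;
      (apply Hnz; first [apply (Hv LA); [congruence|simpl; lra] | apply (Hv LC); [congruence|simpl; lra]
                         | apply (Hv LB); [congruence|simpl; lra]]).
  - destruct Hk as [_ Hv]. apply Hnz, (Hv LA). destruct l; simpl; [congruence|lra|lra].
Qed.

Lemma edgeA_other k f r : has_kind k f -> k <> KVert LB -> k <> KVert LC -> k <> KEdge LA ->
  -1 <= r <= 1 -> f r (-1) = 0.
Proof. intros Hk H1 H2 H3 Hr. destruct k as [[]|[]|]; simpl in Hk; try congruence.
  - destruct Hk as [_ Hv]. apply Hv; simpl; lra.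
  - destruct Hk as [_ Hv]. apply (Hv LA); [congruence|simpl; lra].
  - destruct Hk as [_ Hv]. apply (Hv LA); [congruence|simpl; lra].
  - destruct Hk as [_ Hv]. apply (Hv LA); simpl; lra.
Qed.

Theorem theorem3p2 (p : nat) (hp : (2 <= p)%nat) :
  ~ exists (psi : nat -> R -> R -> R) (d : nat -> R),
      is_basis p psi /\ fe_suitable p psi /\
      (forall i, (i < dimT p)%nat -> d i <> 0) /\
      diag_pseudo_mass_exact (p - 1) (dimT p) psi d.
Proof.
  intros [psi [d [[Hin [Hind _]] [[kd [Hk [Hv [He Hi]]]] [Hd Hpm]]]]].
  set (N := dimT p) in *.
  destruct (count_pos N kd (KEdge LA)) as [e [He_lt Hke]]; [rewrite He; lia|].
  pose proof (Hk e He_lt) as Hke'. rewrite Hke in Hke'. simpl in Hke'.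
  destruct Hke' as [[r0 [s0 [[Hr0 Hs0] Hnz]]] Hvan]. subst s0.
  set (w := fun j => if kind_eqb (kd j) (KEdge LA) then psi j r0 (-1) / d j else 0).
  set (Psi := fun x y => sumN N (fun j => w j * psi j x y)).
  assert (HPsiXY : PC X Y p Psi).
  { apply PC_sum; intros; apply PC_scal, in_T_PC, Hin; auto. }
  assert (Hwz : forall j, (j < N)%nat -> kd j <> KEdge LA -> w j = 0).
  { intros j Hj Hn. unfold w. destruct (kind_eqb (kd j) (KEdge LA)) eqn:E; auto.
    apply kind_eqb_true in E; congruence. }
  assert (HPsi_edge : forall l r s, l <> LA -> on_edge l r s -> Psi r s = 0).
  { intros l r s Hl Ho. unfold Psi; apply sumN_zero; intros j Hj.
    assert (kd j = KEdge LA \/ kd j <> KEdge LA) as [E|E] by (destruct (kd j) as [[]|[]|]; auto; right; congruence).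
    - pose proof (Hk j Hj) as Hkj; rewrite E in Hkj; destruct Hkj as [_ Hv0]. rewrite (Hv0 l); auto; ring.
    - rewrite Hwz; auto; ring. }
  destruct (factor p Psi hp (XY_UT _ _ HPsiXY)) as [H [HH HPsiH]].
  { intros t Ht. apply (HPsi_edge LC); [congruence| simpl; lra]. }
  { intros x Hx. apply (HPsi_edge LB); [congruence| simpl; lra]. }
  apply UT_XY in HH.
  set (f := fun x y => (y + 1) * H x y).
  assert (HfXY : PC X Y (p - 1) f).
  { replace (p - 1)%nat with (1 + (p - 2))%nat by lia. apply PC_mul; auto.
    apply (PC_ext _ _ _ (fun x y => Y x y + 1 * 1)); [intros; unfold Y; ring|].
    apply PC_add; [apply PC_b| apply (PC_weak _ _ 0); [lia|apply PC_const]]. }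
  assert (Hf : in_T (p - 1) f) by (apply PC_in_T; auto).
  specialize (Hpm f Hf).
  set (a := fun i => / d i * int_ref (fun x y => f x y * psi i x y)) in *.
  assert (Hvert : forall l, l <> LA -> snd (vertex l) = -1 -> in_tri (fst (vertex l)) (snd (vertex l)) ->
     forall i, (i < N)%nat -> kd i = KVert l -> a i = 0).
  { intros l Hl Hs Ht i Hi' Hki.
    destruct (count_one N kd (KVert l) (Hv l)) as [iV [HiV [HkV Huniq]]].
    rewrite (Huniq i Hi' Hki).
    pose proof (Hpm _ _ Ht) as Hsum. rewrite (sumN_single N _ iV) in Hsum; auto.
    - unfold f in Hsum. rewrite Hs in Hsum. replace (-1 + 1) with 0 in Hsum by ring.
      rewrite Rmult_0_l in Hsum. apply Rmult_integral in Hsum as [|Hz]; auto.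
      exfalso. pose proof (Hk iV HiV) as HkV'. rewrite HkV in HkV'. simpl in HkV'.
      destruct HkV' as [Hvv _]. apply (proj2 (Hvv l) eq_refl). rewrite Hs; exact Hz.
    - intros j Hj Hne. rewrite (vertex_other l (kd j) (psi j) (Hk j Hj)); [ring| |auto].
      intros E; apply Hne, Huniq; auto. }
  assert (HaB : forall i, (i < N)%nat -> kd i = KVert LB -> a i = 0).
  { apply Hvert; [congruence|reflexivity| simpl; unfold in_tri; lra]. }
  assert (HaC : forall i, (i < N)%nat -> kd i = KVert LC -> a i = 0).
  { apply Hvert; [congruence|reflexivity| simpl; unfold in_tri; lra]. }
  assert (Hkey : sumN N (fun i => w i * int_ref (fun x y => f x y * psi i x y)) = 0).
  { assert (Hs : sumN N (fun i => (/ d i * int_ref (fun x y => f x y * psi i x y)) * psi i r0 (-1)) = 0).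
    { rewrite Hpm by (unfold in_tri; lra). unfold f; ring. }
    rewrite <- Hs. apply sumN_ext; intros i Hi'.
    assert (Hw0 : kd i <> KEdge LA -> w i = 0) by (intros; apply Hwz; auto).
    destruct (kd i) as [[]|[]|] eqn:E;
      try (rewrite Hw0 by congruence;
           rewrite (edgeA_other (kd i) (psi i) r0 (Hk i Hi')) by (try rewrite E; first [congruence|auto]); ring).
    - rewrite Hw0 by congruence. pose proof (HaB i Hi' E) as Z; unfold a in Z; rewrite Z; ring.
    - rewrite Hw0 by congruence. pose proof (HaC i Hi' E) as Z; unfold a in Z; rewrite Z; ring.
    - unfold w; rewrite E; simpl. field. apply Hd; auto. }
  set (G := fun x y => sumN N (fun i => w i * (f x y * psi i x y))).
  assert (HG : PC X Y (p - 1 + p) G).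
  { apply PC_sum; intros; apply PC_scal, PC_mul; auto; apply in_T_PC, Hin; auto. }
  assert (HGi : int_ref G = 0).
  { unfold G. rewrite (int_ref_sum (p - 1 + p)); auto.
    intros; apply PC_mul; auto; apply in_T_PC, Hin; auto. }
  assert (HGe : forall x y, G x y = f x y * Psi x y).
  { intros; unfold G, Psi. rewrite <- sumN_scal. apply sumN_ext; intros; ring. }
  assert (HGpos : forall x y, in_tri x y -> 0 <= G x y).
  { intros x y Ht. rewrite HGe, HPsiH; auto. unfold f, U, Tt. destruct Ht as [Hx [Hy Hxy]].
    replace ((y + 1) * H x y * ((x + 1) * - (x + y) * H x y)) with ((y + 1) * (x + 1) * - (x + y) * (H x y * H x y)) by ring.
    apply Rmult_le_pos; [|apply Rle_0_sqr]. apply Rmult_le_pos; [apply Rmult_le_pos|]; lra. }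
  assert (Hint : forall x y, -1 < x -> -1 < y -> x + y < 0 -> Psi x y = 0).
  { intros x y Hx Hy Hxy. pose proof (int_ref_zero _ G HG HGpos HGi x y Hx Hy Hxy) as Hz.
    rewrite HGe, HPsiH in Hz by (unfold in_tri; lra). unfold f, U, Tt in Hz.
    rewrite HPsiH by (unfold in_tri; lra). unfold U, Tt.
    assert (Hp : 0 < (y + 1) * (x + 1) * - (x + y)) by (apply Rmult_lt_0_compat; [apply Rmult_lt_0_compat|]; lra).
    replace ((y + 1) * H x y * ((x + 1) * - (x + y) * H x y)) with ((y + 1) * (x + 1) * - (x + y) * (H x y * H x y)) in Hz by ring.
    apply Rmult_integral in Hz as [|Hz]; [lra|]. apply Rmult_integral in Hz as [Hz|Hz]; rewrite Hz; ring. }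
  assert (Hall : forall x y, in_tri x y -> Psi x y = 0).
  { intros x y [Hx [Hy Hxy]].
    pose proof (cont_zero_right (fun t => Psi (x + t * (-1/3 - x)) (y + t * (-1/3 - y)))
       (PC_line _ _ _ _ _ _ 0 HPsiXY)) as Hc. simpl in Hc.
    replace x with (x + 0 * (-1/3 - x)) by ring. replace y with (y + 0 * (-1/3 - y)) by ring.
    apply Hc. intros t Ht. apply Hint.
    - assert (0 <= (1 - t) * (x + 1)) by (apply Rmult_le_pos; lra). nra.
    - assert (0 <= (1 - t) * (y + 1)) by (apply Rmult_le_pos; lra). nra.
    - assert (0 <= (1 - t) * (- (x + y))) by (apply Rmult_le_pos; lra). nra. }
  assert (Hwe : w e = 0) by (apply (Hind w); auto).
  unfold w in Hwe. rewrite Hke in Hwe. simpl in Hwe.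
  apply Hnz. unfold Rdiv in Hwe. apply Rmult_integral in Hwe as [|Hw]; auto.
  exfalso. apply (Rinv_neq_0_compat (d e)); auto.
Qed.
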